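(* Let $V:\mathcal{M}^+(\mathbb{R}^d)\to\mathcal{M}^+(\mathbb{R}^d\times\mathbb{R}^d)$ satisfy $\pi_1^{\#}V[\mu]=\mu$ for all $\mu$, and suppose that for every $R>0$ there is a constant $C_F(R)$ such that $\mathcal{W}^g(V[\mu],V[\nu])\le C_F(R)\|\mu-\nu\|_{BL^*}$ whenever $\mu,\nu$ are supported in $B(0,R)$. Then: (V2) for every $R>0$ there is a constant $C$ such that $\|V[\mu]-V[\nu]\|_{BL^*}\le C\|\mu-\nu\|_{BL^*}$ whenever $\mu,\nu$ are supported in $B(0,R)$; and (V3) for every $R>0$ there is $C_H(R)$ such that whenever $\mu,\nu$ are supported in $B(0,R)$, for all $\tau>0$, $$\sup_{\|\psi\|_{BL(\mathbb{R}^d)}\le1}\int_{\mathbb{R}^d\times\mathbb{R}^d}\psi(x+\tau v)\,d(V[\mu]-V[\nu])(x,v)\le(1+C_H(R)\tau)\|\mu-\nu\|_{BL^*}.$$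
   Context: $\mathcal{M}^+(\mathbb{R}^k)$: finite nonnegative Borel measures; $\pi_1(x,v)=x$. $\|f\|_{BL}=\max(\sup|f|,\operatorname{Lip}f)$, $\|\mu\|_{BL^*}=\sup\{\int\psi\,d\mu:\|\psi\|_{BL}\le1\}$, $\|\cdot\|_{TV}$ total variation. For nonnegative measures $\alpha,\beta$ of equal finite mass on $\mathbb{R}^d$, $W_1(\alpha,\beta)=\inf\int|x-y|\,d\gamma$ over couplings $\gamma$ (nonnegative measures on $\mathbb{R}^{2d}$ with marginals $\alpha,\beta$); $\mathcal{P}^{opt}(\alpha,\beta)$ is the set of minimizing couplings. For $\tilde V_1,\tilde V_2\in\mathcal{M}^+(\mathbb{R}^d\times\mathbb{R}^d)$ of equal mass, $\mathcal{P}(\tilde V_1,\tilde V_2)$ is the set of nonnegative measures $p$ on $(\mathbb{R}^d)^4$ (variables $(x,v,y,w)$) with $\pi_{12}^{\#}p=\tilde V_1$, $\pi_{34}^{\#}p=\tilde V_2$. For $V_1,V_2\in\mathcal{M}^+(\mathbb{R}^d\times\mathbb{R}^d)$ with $\mu_i=\pi_1^{\#}V_i$, define $\mathcal{W}^g(V_1,V_2)=\inf\{\int|v-w|\,dp(x,v,y,w)\}$, the infimum over all $\tilde V_1\le V_1$, $\tilde V_2\le V_2$ (nonnegative submeasures), with $\tilde\mu_i=\pi_1^{\#}\tilde V_i$, and $p\in\mathcal{P}(\tilde V_1,\tilde V_2)$ such that $\|\mu_1-\mu_2\|_{BL^*}=\|\mu_1-\tilde\mu_1\|_{TV}+\|\mu_2-\tilde\mu_2\|_{TV}+W_1(\tilde\mu_1,\tilde\mu_2)$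 and $\pi_{13}^{\#}p\in\mathcal{P}^{opt}(\tilde\mu_1,\tilde\mu_2)$. *)

(* Defs.v *)
From HB Require Import structures.
From mathcomp Require Import all_boot all_order all_algebra.
From mathcomp Require Import all_classical all_reals all_analysis.
Set Implicit Arguments. Unset Strict Implicit. Unset Printing Implicit Defensive.
Import Order.TTheory GRing.Theory Num.Theory.
Import numFieldNormedType.Exports.
Local Open Scope classical_set_scope.
Local Open Scope ring_scope.

Notation Rd R d := (g_sigma_algebraType (@open 'rV[R]_d)).

Definition eucl_norm (R : realType) (d : nat) (x : 'rV[R]_d) : R :=
  Num.sqrt (\sum_(i < d) x ord0 i ^+ 2).
Definition eucl_dist (R : realType) (d : nat) (x y : 'rV[R]_d) : R :=
  eucl_norm (x - y).
Definition eucl_dist2 (R : realType) (d : nat) (p q : 'rV[R]_d * 'rV[R]_d) : R :=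
  Num.sqrt (eucl_norm (p.1 - q.1) ^+ 2 + eucl_norm (p.2 - q.2) ^+ 2).

Definition BL1 (X : Type) (R : realType) (dist : X -> X -> R) (f : X -> R) :=
  (forall x, `|f x| <= 1) /\ (forall x y, `|f x - f y| <= dist x y).

Definition transport (R : realType) (n : nat) (tau : R)
  (xv : (Rd R n * Rd R n)%type) : Rd R n :=
  (xv.1 : 'rV[R]_n) + tau *: (xv.2 : 'rV[R]_n).

Local Open Scope ereal_scope.

Definition ipm d (X : measurableType d) (R : realType) (F : set (X -> R))
  (m1 m2 : set X -> \bar R) : \bar R :=
  ereal_sup [set \int[m1]_x (f x)%:E - \int[m2]_x (f x)%:E | f in F].

Definition BLdual (R : realType) (n : nat) (mu nu : set (Rd R n) -> \bar R) :=
  ipm [set f : Rd R n -> R | BL1 (@eucl_dist R n) f] mu nu.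

Definition BLdual2 (R : realType) (n : nat)
  (V1 V2 : set (Rd R n * Rd R n) -> \bar R) :=
  ipm [set f : Rd R n * Rd R n -> R | BL1 (@eucl_dist2 R n) f] V1 V2.

(* ||pi_1# V1 - pi_1# V2||_{BL^*}: integrals against the pushforwards *)
Definition BLdual_fst (R : realType) (n : nat)
  (V1 V2 : set (Rd R n * Rd R n) -> \bar R) :=
  ipm [set (f \o fst) | f in [set f : Rd R n -> R | BL1 (@eucl_dist R n) f]] V1 V2.

Definition TVnorm d (X : measurableType d) (R : realType)
  (m1 m2 : set X -> \bar R) : \bar R :=
  ereal_sup [set s | exists (k : nat) (A : 'I_k -> set X),
      [/\ (forall i, measurable (A i)),
          (forall i j, i != j -> A i `&` A j = set0) &
          s = \sum_(i < k) `|m1 (A i) - m2 (A i)|]].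

Definition coupling (R : realType) (n : nat)
  (alpha beta : set (Rd R n) -> \bar R)
  (gamma : {measure set (Rd R n * Rd R n) -> \bar R}) :=
  forall A, measurable A ->
    gamma (A `*` setT) = alpha A /\ gamma (setT `*` A) = beta A.

Definition W1 (R : realType) (n : nat) (alpha beta : set (Rd R n) -> \bar R) :=
  ereal_inf [set \int[gamma]_xy (eucl_dist (xy.1 : 'rV[R]_n) xy.2)%:E |
     gamma in [set gamma | coupling alpha beta gamma]].

Definition Popt (R : realType) (n : nat) (alpha beta : set (Rd R n) -> \bar R)
  (gamma : {measure set (Rd R n * Rd R n) -> \bar R}) :=
  coupling alpha beta gamma /\
  \int[gamma]_xy (eucl_dist (xy.1 : 'rV[R]_n) xy.2)%:E = W1 alpha beta.

Definition proj1m (R : realType) (n : nat) (V : set (Rd R n * Rd R n) -> \bar R)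
  : set (Rd R n) -> \bar R := fun A => V (A `*` setT).

Definition submeasure d (X : measurableType d) (R : realType)
  (Vt : {measure set X -> \bar R}) (V : set X -> \bar R) :=
  forall A, measurable A -> Vt A <= V A.

Definition Wg (R : realType) (n : nat)
  (V1 V2 : set (Rd R n * Rd R n) -> \bar R) : \bar R :=
  ereal_inf [set x | exists (Vt1 Vt2 : {measure set (Rd R n * Rd R n) -> \bar R})
    (p : {measure set ((Rd R n * Rd R n) * (Rd R n * Rd R n)) -> \bar R}),
    [/\ submeasure Vt1 V1 /\ submeasure Vt2 V2,
        (forall A, measurable A -> p (A `*` setT) = Vt1 A /\ p (setT `*` A) = Vt2 A),
        BLdual_fst V1 V2 = TVnorm (proj1m V1) (proj1m Vt1)
                            + TVnorm (proj1m V2) (proj1m Vt2)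
                            + W1 (proj1m Vt1) (proj1m Vt2),
        (* pi_13# p in P^opt(mu1~, mu2~) *)
        (exists gamma : {measure set (Rd R n * Rd R n) -> \bar R},
           (forall A, measurable A ->
              gamma A = p [set z | A (z.1.1, z.2.1)]) /\
           Popt (proj1m Vt1) (proj1m Vt2) gamma) &
        x = \int[p]_z (eucl_dist (z.1.2 : 'rV[R]_n) z.2.2)%:E]].

Definition supported_in (R : realType) (n : nat) (mu : set (Rd R n) -> \bar R)
  (r : R) := mu [set x : Rd R n | (r < eucl_norm (x : 'rV[R]_n))%R] = 0.

(* Main.v *)
Require Import Defs.
From HB Require Import structures.
From mathcomp Require Import all_boot all_order all_algebra.
From mathcomp Require Import all_classical all_reals all_analysis.
Import Order.TTheory GRing.Theory Num.Theory.
Import numFieldNormedType.Exports.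
Local Open Scope classical_set_scope.
Local Open Scope ring_scope.
From mathcomp Require Import ring lra.
From mathcomp Require Import measurable_realfun.
Set Implicit Arguments. Unset Strict Implicit.
Local Notation mfD := measurable_realfun.measurable_funD.
Local Notation mfB := measurable_realfun.measurable_funB.
Local Notation mfM := measurable_realfun.measurable_funM.
Local Notation mfX := measurable_realfun.measurable_funX.
Local Notation mEFinP := measurable_realfun.measurable_EFinP.

Section Meas.
Variable R : realType.

Lemma coord_meas n (i : 'I_n) :
  measurable_fun setT (fun x : Rd R n => (x : 'rV[R]_n) ord0 i).
Proof.
apply: (measurability _ (measurable_realfun.RGenOpens.measurableE R)).
move=> _ [_ [a [b ->]] <-]; rewrite setTI.
apply: sub_sigma_algebra.
move: (@coord_continuous R 1 n ord0 i) => /continuousP; apply.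
exact: interval_open.
Qed.

Lemma msum d (T : measurableType d) (I : Type) (r : seq I) (F : I -> T -> R) :
  (forall i, measurable_fun setT (F i)) ->
  measurable_fun setT (fun t => \sum_(i <- r) F i t).
Proof.
move=> mF; elim: r => [|a r IH].
  under eq_fun do rewrite big_nil. exact: measurable_cst.
under eq_fun do rewrite big_cons. exact: (mfD (mF a) IH).
Qed.

Definition mrow d (T : measurableType d) n (h : T -> 'rV[R]_n) :=
  forall i, measurable_fun setT (fun t => h t ord0 i).

Lemma mrow_norm d (T : measurableType d) n (h : T -> 'rV[R]_n) :
  mrow h -> measurable_fun setT (fun t => eucl_norm (h t)).
Proof.
move=> mh; rewrite /eucl_norm.
change (measurable_fun setT (Num.sqrt \o (fun t => \sum_(i < n) h t ord0 i ^+ 2))).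
apply: measurableT_comp.
  exact: measurable_realfun.continuous_measurable_fun (@sqrt_continuous R).
apply: msum => i; exact: mfX.
Qed.

Lemma mrowB d (T : measurableType d) n (h1 h2 : T -> 'rV[R]_n) :
  mrow h1 -> mrow h2 -> mrow (fun t => h1 t - h2 t).
Proof.
move=> m1 m2 i.
have -> : (fun t => (h1 t - h2 t) ord0 i) = (fun t => h1 t ord0 i) \- (fun t => h2 t ord0 i).
  by apply/funext => t; rewrite !mxE.
exact: (mfB (m1 i) (m2 i)).
Qed.

Lemma mrowDZ d (T : measurableType d) n (h1 h2 : T -> 'rV[R]_n) (c : R) :
  mrow h1 -> mrow h2 -> mrow (fun t => h1 t + c *: h2 t).
Proof.
move=> m1 m2 i.
have -> : (fun t => (h1 t + c *: h2 t) ord0 i) = (fun t => h1 t ord0 i) \+ ((fun=> c) \* (fun t => h2 t ord0 i)).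
  by apply/funext => t; rewrite !mxE.
exact: (mfD (m1 i) (mfM (measurable_cst c) (m2 i))).
Qed.

Lemma mrow_cst d (T : measurableType d) n (q : 'rV[R]_n) : mrow (fun _ : T => q).
Proof. move=> i; exact: measurable_cst. Qed.

Lemma mrow_id n : mrow (fun x : Rd R n => (x : 'rV[R]_n)).
Proof. exact: coord_meas. Qed.

Lemma mrow_comp d d' (T : measurableType d) (U : measurableType d') n
   (g : T -> U) (h : U -> 'rV[R]_n) :
  measurable_fun setT g -> mrow h -> mrow (h \o g).
Proof. move=> mg mh i; exact: (measurableT_comp (mh i) mg). Qed.

End Meas.
Section Norm.
Variables (R : realType) (n : nat).
Implicit Types x y : 'rV[R]_n.

Lemma sq_ge0 (a : R) : 0 <= a ^+ 2. Proof. exact: sqr_ge0. Qed.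

Lemma en_ge0 x : 0 <= eucl_norm x. Proof. exact: sqrtr_ge0. Qed.

Lemma en_sq x : eucl_norm x ^+ 2 = \sum_(i < n) x ord0 i ^+ 2.
Proof. by rewrite sqr_sqrtr // sumr_ge0 // => i _; exact: sqr_ge0. Qed.

Lemma en_CS x y : \sum_(i < n) x ord0 i * y ord0 i <= eucl_norm x * eucl_norm y.
Proof.
set s := eucl_norm x; set t := eucl_norm y.
have s0 : 0 <= s := en_ge0 x. have t0 : 0 <= t := en_ge0 y.
have key : 2 * s * t * (\sum_(i < n) x ord0 i * y ord0 i) <= 2 * s ^+ 2 * t ^+ 2.
  have H : \sum_(i < n) (2 * s * t) * (x ord0 i * y ord0 i) <=
           \sum_(i < n) (t ^+ 2 * x ord0 i ^+ 2 + s ^+ 2 * y ord0 i ^+ 2).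
    apply: ler_sum => i _.
    have := sqr_ge0 (t * x ord0 i - s * y ord0 i); nra.
  move: H; rewrite -mulr_sumr big_split /= -!mulr_sumr -!en_sq -/s -/t; nra.
have [st0|st0] := eqVneq (s * t) 0.
  move: st0 => /eqP; rewrite mulf_eq0 => /orP [] /eqP z.
  - have : s ^+ 2 = 0 by rewrite z expr0n.
    rewrite /s en_sq => /eqP; rewrite psumr_eq0; last by move=> i _; exact: sqr_ge0.
    move=> /allP H; rewrite big1; first exact: mulr_ge0 (en_ge0 x) (en_ge0 y).
    move=> i _.
    have /implyP := H i (mem_index_enum _); rewrite sqrf_eq0 => /(_ isT) /eqP ->.
    by rewrite mul0r.
  - have : t ^+ 2 = 0 by rewrite z expr0n.
    rewrite /t en_sq => /eqP; rewrite psumr_eq0; last by move=> i _; exact: sqr_ge0.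
    move=> /allP H; rewrite big1; first exact: mulr_ge0 (en_ge0 x) (en_ge0 y).
    move=> i _.
    have /implyP := H i (mem_index_enum _); rewrite sqrf_eq0 => /(_ isT) /eqP ->.
    by rewrite mulr0.
have stp : 0 < s * t by rewrite lt0r st0 /= mulr_ge0 // en_ge0.
move: key; set S := \sum_(i < n) _ => key.
have : (s * t) * (2 * (S - s * t)) <= 0 by nra.
rewrite pmulr_rle0 //; nra.
Qed.

Lemma en_triangle x y : eucl_norm (x + y) <= eucl_norm x + eucl_norm y.
Proof.
rewrite -[X in _ <= X]ger0_norm ?addr_ge0 ?en_ge0 // -sqrtr_sqr.
rewrite /eucl_norm ler_sqrt ?sqr_ge0 //.
have -> : \sum_(i < n) (x + y) ord0 i ^+ 2 =
  \sum_(i < n) x ord0 i ^+ 2 + \sum_(i < n) y ord0 i ^+ 2 + 2 * \sum_(i < n) x ord0 i * y ord0 i.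
  rewrite mulr_sumr -!big_split /=; apply: eq_bigr => i _; rewrite !mxE; ring.
have := en_CS x y; have := en_sq x; have := en_sq y; rewrite /eucl_norm; nra.
Qed.

Lemma en_scale (c : R) x : eucl_norm (c *: x) = `|c| * eucl_norm x.
Proof.
rewrite /eucl_norm -sqrtr_sqr -sqrtrM ?sqr_ge0 // mulr_sumr.
by congr Num.sqrt; apply: eq_bigr => i _; rewrite !mxE; ring.
Qed.

Lemma en_opp x : eucl_norm (- x) = eucl_norm x.
Proof. by rewrite -scaleN1r en_scale normrN normr1 mul1r. Qed.

Lemma ed_sym x y : eucl_dist x y = eucl_dist y x.
Proof. by rewrite /eucl_dist -en_opp opprB. Qed.

Lemma en_small x (e : R) : 0 < e -> (forall i, `|x ord0 i| <= e / (n.+1)%:R) ->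
  eucl_norm x < e.
Proof.
move=> e0 H; rewrite -[X in _ < X]ger0_norm ?ltW // -sqrtr_sqr /eucl_norm ltr_sqrt; last by rewrite exprn_gt0.
apply: (le_lt_trans (y := \sum_(i < n) (e / n.+1%:R) ^+ 2)).
  apply: ler_sum => i _; rewrite -real_normK ?num_real //; apply: lerXn2r => //;
   rewrite ?nnegrE ?normr_ge0 ?divr_ge0 ?ltW //.
rewrite sumr_const card_ord -mulr_natr.
have np : (0 : R) < n.+1%:R by [].
rewrite mul1r -mulr_natr.
have aN : e / n.+1%:R * n.+1%:R = e by rewrite divfK // lt0r_neq0.
have a0 : 0 < e / n.+1%:R by rewrite divr_gt0.
move: aN a0; set a := e / _ => aN a0.
have n0 : (0 : R) <= n%:R by [].
have -> : (n.+1%:R : R) = n%:R + 1 by rewrite -natr1.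
rewrite -aN -[n.+1%:R]natr1.
have a2 : 0 < a * a by rewrite mulr_gt0.
rewrite mul1r mulfK; last by rewrite lt0r_neq0 // ltr_wpDl.
rewrite -mulr_natr; nra.
Qed.
End Norm.
Section Lip.
Variable R : realType.
Lemma lip_meas d (T : measurableType d) (X : Type) (dist : X -> X -> R) (psi : X -> R)
  (q : nat -> X) (g : T -> X) :
  (forall a b, psi a - psi b <= dist a b) ->
  (forall x e, 0 < e -> exists k, dist x (q k) + dist (q k) x < e) ->
  (forall k, measurable_fun setT (fun t => dist (g t) (q k))) ->
  measurable_fun setT (psi \o g).
Proof.
move=> L D M; apply/mEFinP.
pose f := fun (k : nat) (t : T) => ((psi (q k) + dist (g t) (q k))%:E : \bar R).
have -> : EFin \o (psi \o g) = fun t => einfs (f ^~ t) 0.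
  apply/funext => t /=; rewrite /einfs /sdrop /=.
  apply/eqP; rewrite eq_le; apply/andP; split.
    apply: le_ereal_inf_tmp => _ [k _ <-]; rewrite /f lee_fin.
    have := L (g t) (q k); lra.
  apply/lee_addgt0Pr => e e0.
  have [k Hk] := D (g t) e e0.
  apply: (le_trans (ereal_inf_lbound _)); first by exists k.
  rewrite /f -EFinD lee_fin.
  have := L (q k) (g t); lra.
apply: measurable_realfun.measurable_fun_einfs => k.
apply/mEFinP; rewrite /f.
exact: (measurable_realfun.measurable_funD (measurable_cst _) (M k)).
Qed.
End Lip.
Section Dense.
Variables (R : realType) (n : nat).

Lemma approx_row (x : 'rV[R]_n) (dl : R) : 0 < dl ->
  exists r : 'rV[rat]_n, forall i, `|x ord0 i - ratr (r ord0 i)| <= dl.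
Proof.
move=> dl0.
have H : forall i : 'I_n, exists q : rat, `|x ord0 i - ratr q| <= dl.
  move=> i; have [q] := @rat_in_itvoo R (x ord0 i - dl) (x ord0 i + dl) ltac:(lra).
  rewrite in_itv /= => /andP [h1 h2]; exists q.
  rewrite ler_norml; apply/andP; split; lra.
exists (\row_i xchoose (H i)) => i; rewrite mxE; exact: (xchooseP (H i)).
Qed.

Definition qrow (k : nat) : 'rV[R]_n :=
  match unpickle k : option 'rV[rat]_n with Some r => map_mx ratr r | None => 0 end.

Lemma qrow_dense (x : 'rV[R]_n) e : 0 < e -> exists k, eucl_dist x (qrow k) < e.
Proof.
move=> e0; have [r Hr] := approx_row x (divr_gt0 e0 (ltr0Sn R n)).
exists (pickle r); rewrite /qrow pickleK /eucl_dist; apply: en_small => // i.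
by rewrite !mxE; exact: Hr.
Qed.

Definition qpair (k : nat) : 'rV[R]_n * 'rV[R]_n :=
  match unpickle k : option ('rV[rat]_n * 'rV[rat]_n) with
  | Some r => (map_mx ratr r.1, map_mx ratr r.2) | None => (0, 0) end.

Lemma qpair_dense (x : 'rV[R]_n * 'rV[R]_n) e : 0 < e ->
  exists k, eucl_dist x.1 (qpair k).1 < e /\ eucl_dist x.2 (qpair k).2 < e.
Proof.
move=> e0; have [r1 H1] := approx_row x.1 (divr_gt0 e0 (ltr0Sn R n)).
have [r2 H2] := approx_row x.2 (divr_gt0 e0 (ltr0Sn R n)).
exists (pickle (r1, r2)); rewrite /qpair pickleK /eucl_dist /=; split; apply: en_small => // i.
  by rewrite !mxE; exact: H1.
by rewrite !mxE; exact: H2.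
Qed.

Lemma d2_le (p q : 'rV[R]_n * 'rV[R]_n) :
  eucl_dist2 p q <= eucl_dist p.1 q.1 + eucl_dist p.2 q.2.
Proof.
rewrite /eucl_dist2 /eucl_dist.
have a0 := en_ge0 (p.1 - q.1); have b0 := en_ge0 (p.2 - q.2).
rewrite -[X in _ <= X]ger0_norm ?addr_ge0 // -sqrtr_sqr ler_sqrt ?sqr_ge0 //; nra.
Qed.
End Dense.
Section Push.
Variable R : realType.
Local Open Scope ereal_scope.

Lemma bdd1 d (T : measurableType d) (f : T -> R) (A : set T) :
  (forall x, (`|f x| <= 1)%R) -> [bounded f x | x in A].
Proof.
move=> H; exists 1%R; split => // M M1 x _; exact: (le_trans (H x) (ltW M1)).
Qed.

Lemma push_ge0 d1 d2 (X : measurableType d1) (Y : measurableType d2)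
  (p : {measure set X -> \bar R}) (m : {measure set Y -> \bar R}) (phi : X -> Y)
  (mphi : measurable_fun setT phi)
  (H : forall A, measurable A -> p (phi @^-1` A) = m A)
  (f : Y -> \bar R) (mf : measurable_fun setT f) (f0 : forall y, 0 <= f y) :
  \int[m]_y f y = \int[p]_x f (phi x).
Proof.
rewrite (eq_measure_integral (pushforward p phi)); last by move=> A mA _; rewrite -H.
by rewrite ge0_integral_pushforward // preimage_setT.
Qed.

Lemma push_bdd d1 d2 (X : measurableType d1) (Y : measurableType d2)
  (p : {measure set X -> \bar R}) (m : {measure set Y -> \bar R}) (phi : X -> Y)
  (mphi : measurable_fun setT phi)
  (H : forall A, measurable A -> p (phi @^-1` A) = m A)
  (f : Y -> R) (mf : measurable_fun setT f) (f1 : forall y, (`|f y| <= 1)%R)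
  (pT : p setT < +oo) :
  \int[m]_y (f y)%:E = \int[p]_x (f (phi x))%:E.
Proof.
rewrite (eq_measure_integral (pushforward p phi)); last by move=> A mA _; rewrite -H.
rewrite (@integral_pushforward _ _ _ _ _ phi mphi p setT (EFin \o f)) ?preimage_setT //.
  exact/measurable_realfun.measurable_EFinP.
apply: (measurable_bounded_integrable (f := f \o phi)) => //.
  exact: measurableT_comp.
apply: (@bdd1 _ _ (f \o phi)) => y /=; exact: f1.
Qed.
End Push.
Section Diff.
Variable R : realType.
Local Open Scope ereal_scope.

Lemma int_bd d (T : measurableType d) (m : {measure set T -> \bar R}) (f : T -> R)
  (mf : measurable_fun setT f) (f1 : forall x, (`|f x| <= 1)%R) (mT : m setT < +oo) :
  exists a M : R, \int[m]_x (f x)%:E = a%:E /\ m setT = M%:E /\ (`|a| <= M)%R.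
Proof.
have m0 : 0 <= m setT by [].
have [M hM] : exists M : R, m setT = M%:E.
  by move: m0 mT; case: (m setT) => // r _ _; exists r.
have hi : `|\int[m]_x (f x)%:E| <= M%:E.
  apply: (le_trans (le_abse_integral _ _ _)) => //.
    exact/measurable_EFinP.
  apply: (le_trans (y := \int[m]_x (cst 1%:E) x)).
    apply: ge0_le_integral => //.
    - by apply/measurable_EFinP; exact: measurableT_comp.
    - by move=> x _; rewrite /= lee_fin.
  by rewrite integral_cst // mul1e hM.
have [a ha] : exists a : R, \int[m]_x (f x)%:E = a%:E.
  move: hi; case: (\int[m]_x (f x)%:E) => // r _; by exists r.
by exists a, M; split => //; split => //; move: hi; rewrite ha /= lee_fin.
Qed.

Lemma int_lin d (T : measurableType d) (m : {measure set T -> \bar R}) (f : T -> R)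
  (mf : measurable_fun setT f) (f1 : forall x, (`|f x| <= 1)%R) (mT : m setT < +oo) (c s : R) :
  \int[m]_x ((c + s * f x)%:E) = c%:E * m setT + s%:E * \int[m]_x (f x)%:E.
Proof.
have if1 : m.-integrable setT (EFin \o f).
  by apply: measurable_bounded_integrable => //; exact: bdd1.
have ic : m.-integrable setT (EFin \o (fun=> c)).
  apply: measurable_bounded_integrable => //.
  exists `|c|%R; split => // M M1 x _; exact: ltW.
under eq_integral do rewrite EFinD EFinM.
rewrite integralD //; last by apply: integrableZl.
by rewrite integral_cst // integralZl.
Qed.
End Diff.
Section Diff2.
Variable R : realType.
Local Open Scope ereal_scope.
Lemma sub_diff d (T : measurableType d) (m1 m2 : {measure set T -> \bar R})
  (H12 : forall A, measurable A -> m1 A <= m2 A) (m2T : m2 setT < +oo)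
  (f : T -> R) (mf : measurable_fun setT f) (f1 : forall x, (`|f x| <= 1)%R) :
  exists a1 a2 M1 M2 : R, [/\ \int[m1]_x (f x)%:E = a1%:E, \int[m2]_x (f x)%:E = a2%:E,
     m1 setT = M1%:E, m2 setT = M2%:E &
     ((a2 - a1 <= M2 - M1) /\ (a1 - a2 <= M2 - M1))%R].
Proof.
have m1T : m1 setT < +oo by apply: le_lt_trans (H12 _ measurableT) m2T.
have [a1 [M1 [h1 [k1 b1]]]] := int_bd mf f1 m1T.
have [a2 [M2 [h2 [k2 b2]]]] := int_bd mf f1 m2T.
exists a1, a2, M1, M2; split => //.
have G : forall s : R, (`|s| = 1)%R -> \int[m1]_x ((1 + s * f x)%:E) <= \int[m2]_x ((1 + s * f x)%:E).
  move=> s hs; apply: ge0_le_measure_integral => //.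
  - move=> x; rewrite lee_fin.
    have := f1 x; have : (`|s * f x| <= 1)%R by rewrite normrM hs mul1r.
    rewrite ler_norml => /andP [? ?] _; lra.
  - apply/measurable_EFinP; apply: measurable_funD; first exact: measurable_cst.
    exact: (measurable_funM (measurable_cst s) mf).
have Gm := G (-1)%R ltac:(by rewrite normrN normr1).
have Gp := G 1%R ltac:(by rewrite normr1).
move: Gm Gp; rewrite !int_lin // h1 h2 k1 k2 -!EFinM -!EFinD !lee_fin => Gm Gp.
split; lra.
Qed.
End Diff2.
Section BLmeas.
Variables (R : realType) (n : nat).

Lemma BL_meas_g d (T : measurableType d) (g : T -> 'rV[R]_n) (mg : mrow g)
  (f : 'rV[R]_n -> R) : BL1 (@eucl_dist R n) f -> measurable_fun setT (f \o g).
Proof.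
move=> [_ Lf]; apply: (@lip_meas R _ _ _ (@eucl_dist R n) f (@qrow R n)).
- by move=> a b; have := Lf a b; rewrite ler_norml => /andP [].
- move=> x e e0; have e2 : 0 < e / 2 by lra.
  have [k hk] := qrow_dense x e2.
  exists k; rewrite [eucl_dist (qrow _ _ _) x]ed_sym; lra.
- move=> k; apply: mrow_norm; apply: mrowB => //; exact: mrow_cst.
Qed.

Lemma BL_meas (f : Rd R n -> R) : BL1 (@eucl_dist R n) f -> measurable_fun setT f.
Proof. move=> H; exact: (BL_meas_g (@mrow_id R n) H). Qed.

Lemma BL2_meas (f : (Rd R n * Rd R n)%type -> R) : BL1 (@eucl_dist2 R n) f ->
  measurable_fun setT f.
Proof.
move=> [_ Lf].
suff K : measurable_fun setT (f \o (fun x : (Rd R n * Rd R n)%type => x)) by exact: K.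
apply: (@lip_meas R _ _ _ (@eucl_dist2 R n) f (@qpair R n)).
- by move=> a b; have := Lf a b; rewrite ler_norml => /andP [].
- move=> x e e0; have e4 : 0 < e / 4 by lra.
  have [k [h1 h2]] := qpair_dense x e4.
  exists k; have := d2_le x (qpair R n k); have := d2_le (qpair R n k) x.
  rewrite /= (ed_sym (qpair R n k).1) (ed_sym (qpair R n k).2); lra.
- move=> k.
  change (measurable_fun setT (Num.sqrt \o (fun t : (Rd R n * Rd R n)%type =>
     eucl_norm ((t.1 : 'rV[R]_n) - (qpair R n k).1) ^+ 2 +
     eucl_norm ((t.2 : 'rV[R]_n) - (qpair R n k).2) ^+ 2))).
  apply: measurableT_comp.
    exact: continuous_measurable_fun (@sqrt_continuous R).
  apply: measurable_funD; apply: measurable_funX; apply: mrow_norm; apply: mrowB; try exact: mrow_cst.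
    exact: (mrow_comp measurable_fst (@mrow_id R n)).
  exact: (mrow_comp measurable_snd (@mrow_id R n)).
Qed.
End BLmeas.
Section BLfin.
Variables (R : realType) (n : nat).
Local Open Scope ereal_scope.

Lemma preimage_fst_X (T1 T2 : Type) (A : set T1) :
  (@fst T1 T2) @^-1` A = A `*` setT.
Proof. by apply/seteqP; split => [z Az|z []] //=. Qed.

Lemma preimage_snd_X (T1 T2 : Type) (A : set T2) :
  (@snd T1 T2) @^-1` A = setT `*` A.
Proof. by apply/seteqP; split => [z Az|z []] //=. Qed.

Lemma BL_fst (mu nu : {measure set (Rd R n) -> \bar R})
  (Vm Vn : {measure set (Rd R n * Rd R n)%type -> \bar R})
  (H1 : forall A, measurable A -> Vm (A `*` setT) = mu A)
  (H2 : forall A, measurable A -> Vn (A `*` setT) = nu A)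
  (VmT : Vm setT < +oo) (VnT : Vn setT < +oo) :
  BLdual_fst Vm Vn = BLdual mu nu.
Proof.
have E : forall f, BL1 (@eucl_dist R n) f ->
   \int[Vm]_x ((f \o fst) x)%:E - \int[Vn]_x ((f \o fst) x)%:E =
   \int[mu]_x (f x)%:E - \int[nu]_x (f x)%:E.
  move=> f Hf; have mf := BL_meas Hf.
  rewrite (push_bdd (p := Vm) (phi := fst) _ _ mf) //; last 2 first.
  - by move=> A mA; rewrite preimage_fst_X H1.
  - by move=> x; case: Hf.
  rewrite (push_bdd (p := Vn) (phi := fst) _ _ mf) //.
  - by move=> A mA; rewrite preimage_fst_X H2.
  - by move=> x; case: Hf.
rewrite /BLdual_fst /BLdual /ipm; congr ereal_sup; apply/seteqP; split.
  move=> _ [_ [f Hf <-] <-]; exists f => //; exact/esym/E.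
move=> _ [f Hf <-]; exists (f \o fst); first by exists f.
exact: E.
Qed.

Lemma BL_fin (mu nu : {measure set (Rd R n) -> \bar R})
  (muT : mu setT < +oo) (nuT : nu setT < +oo) :
  exists b : R, BLdual mu nu = b%:E /\ (0 <= b)%R.
Proof.
have [M1 k1] : exists M1 : R, mu setT = M1%:E.
  have m0 : 0 <= mu setT by []. by move: m0 muT; case: (mu setT) => // r _ _; exists r.
have [M2 k2] : exists M2 : R, nu setT = M2%:E.
  have m0 : 0 <= nu setT by []. by move: m0 nuT; case: (nu setT) => // r _ _; exists r.
have up : BLdual mu nu <= (M1 + M2)%:E.
  apply: ge_ereal_sup => _ [f Hf <-].
  have mf := BL_meas Hf.
  have f1 : forall x, (`|f x| <= 1)%R by case: Hf.
  have [a [M [h [k b]]]] := int_bd mf f1 muT.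
  have [a' [M' [h' [k' b']]]] := int_bd mf f1 nuT.
  move: k k'; rewrite k1 k2 => -[eM] [eM'].
  rewrite h h' -EFinB lee_fin.
  move: b b'; rewrite -eM -eM' !ler_norml => /andP [? ?] /andP [? ?]; lra.
have lo : 0 <= BLdual mu nu.
  apply: (le_trans _ (ereal_sup_ubound _)); last first.
    exists (fun _ => 0%R); last by rewrite integral0 integral0 subee.
    split => x; first by rewrite normr0.
    by move=> y; rewrite subrr normr0; exact: en_ge0.
  by [].
move: up lo; case: (BLdual mu nu) => // b _; rewrite lee_fin => b0.
by exists b.
Qed.
End BLfin.
Section Aux.
Variables (R : realType) (n : nat).
Local Open Scope ereal_scope.

Lemma TV_ge d (T : measurableType d) (m1 m2 : set T -> \bar R) :
  `|m1 setT - m2 setT| <= TVnorm m1 m2.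
Proof.
apply: ereal_sup_ubound; exists 1%N, (fun _ => setT); split => //.
- by move=> i j; rewrite (ord1 i) (ord1 j) eqxx.
- by rewrite big_ord1.
Qed.

Lemma TV_ge0 d (T : measurableType d) (m1 m2 : set T -> \bar R) :
  0 <= TVnorm m1 m2.
Proof.
apply: (le_trans _ (ereal_sup_ubound _)); last first.
  exists 0%N, (fun _ => set0); split => //.
  - by move=> i j; rewrite setI0.
  - by rewrite big_ord0.
Qed.

Lemma fin3 (a b c : \bar R) (B : R) : a + b + c = B%:E ->
  exists ra rb rc : R, [/\ a = ra%:E, b = rb%:E, c = rc%:E & B = ra + rb + rc]%R.
Proof.
move=> H; have : a + b + c \is a fin_num by rewrite H.
rewrite !fin_numD => /andP [/andP [fa fb] fc].
exists (fine a), (fine b), (fine c); split; rewrite ?fineK //.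
by apply: EFin_inj; rewrite -H !EFinD !fineK.
Qed.

Lemma proj1mT (V : set (Rd R n * Rd R n)%type -> \bar R) : proj1m V setT = V setT.
Proof. by rewrite /proj1m setXTT. Qed.

Lemma mdist d (T : measurableType d) (g1 g2 : T -> Rd R n) :
  measurable_fun setT g1 -> measurable_fun setT g2 ->
  measurable_fun setT (fun t => eucl_dist (g1 t : 'rV[R]_n) (g2 t)).
Proof.
move=> m1 m2; apply: mrow_norm; apply: mrowB.
  exact: (mrow_comp m1 (@mrow_id R n)).
exact: (mrow_comp m2 (@mrow_id R n)).
Qed.
End Aux.
Section Step3.
Variables (R : realType) (n : nat).
Local Open Scope ereal_scope.

Lemma step3 (Vm Vn : {measure set (Rd R n * Rd R n)%type -> \bar R})
  (VmT : Vm setT < +oo) (VnT : Vn setT < +oo)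
  (Phi : (Rd R n * Rd R n)%type -> R) (mPhi : measurable_fun setT Phi)
  (bPhi : forall z, (`|Phi z| <= 1)%R) (c : R) (c0 : (0 <= c)%R)
  (lPhi : forall z1 z2 : (Rd R n * Rd R n)%type,
     (Phi z1 - Phi z2 <= eucl_dist (z1.1 : 'rV[R]_n) z2.1 + c * eucl_dist (z1.2 : 'rV[R]_n) z2.2)%R)
  (B : R) (hB : BLdual_fst Vm Vn = B%:E) (xr : R)
  (Sx : exists (Vt1 Vt2 : {measure set (Rd R n * Rd R n) -> \bar R})
    (p : {measure set ((Rd R n * Rd R n) * (Rd R n * Rd R n)) -> \bar R}),
    [/\ submeasure Vt1 Vm /\ submeasure Vt2 Vn,
        (forall A, measurable A -> p (A `*` setT) = Vt1 A /\ p (setT `*` A) = Vt2 A),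
        BLdual_fst Vm Vn = TVnorm (proj1m Vm) (proj1m Vt1)
                            + TVnorm (proj1m Vn) (proj1m Vt2)
                            + W1 (proj1m Vt1) (proj1m Vt2),
        (exists gamma : {measure set (Rd R n * Rd R n) -> \bar R},
           (forall A, measurable A ->
              gamma A = p [set z | A (z.1.1, z.2.1)]) /\
           Popt (proj1m Vt1) (proj1m Vt2) gamma) &
        xr%:E = \int[p]_z (eucl_dist (z.1.2 : 'rV[R]_n) z.2.2)%:E]) :
  \int[Vm]_z (Phi z)%:E - \int[Vn]_z (Phi z)%:E <= (B + c * xr)%:E.
Proof.
move: Sx => [Vt1 [Vt2 [p [[sub1 sub2] marg eqB [gamma [hg [cg hW]]] hx]]]].
have [a1 [am [T1 [Tm [h1 hm k1 km [d1 _]]]]]] := sub_diff sub1 VmT mPhi bPhi.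
have [a2 [an [T2 [Tn [h2 hn k2 kn [_ d2]]]]]] := sub_diff sub2 VnT mPhi bPhi.
move: eqB; rewrite hB => /esym /fin3 [t1 [t2 [w [e1 e2 e3 eB]]]].
have tv1 := TV_ge (proj1m Vm) (proj1m Vt1).
have tv2 := TV_ge (proj1m Vn) (proj1m Vt2).
rewrite !proj1mT km k1 kn k2 e1 e2 -EFinB /= lee_fin in tv1 tv2.
have pT : p setT = T1%:E by rewrite -setXTT; case: (marg setT measurableT) => -> _; rewrite k1.
have pTf : p setT < +oo by rewrite pT ltry.
have i1 : \int[Vt1]_z (Phi z)%:E = \int[p]_z (Phi z.1)%:E.
  apply: (push_bdd (phi := fst)) => //.
  by move=> A mA; rewrite preimage_fst_X; case: (marg A mA).
have i2 : \int[Vt2]_z (Phi z)%:E = \int[p]_z (Phi z.2)%:E.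
  apply: (push_bdd (phi := snd)) => //.
  by move=> A mA; rewrite preimage_snd_X; case: (marg A mA).
have mf11 : measurable_fun setT (fun z : ((Rd R n * Rd R n) * (Rd R n * Rd R n))%type => z.1.1).
  exact: (measurableT_comp measurable_fst measurable_fst).
have mf21 : measurable_fun setT (fun z : ((Rd R n * Rd R n) * (Rd R n * Rd R n))%type => z.2.1).
  exact: (measurableT_comp measurable_fst measurable_snd).
have mf12 : measurable_fun setT (fun z : ((Rd R n * Rd R n) * (Rd R n * Rd R n))%type => z.1.2).
  exact: (measurableT_comp measurable_snd measurable_fst).
have mf22 : measurable_fun setT (fun z : ((Rd R n * Rd R n) * (Rd R n * Rd R n))%type => z.2.2).
  exact: (measurableT_comp measurable_snd measurable_snd).
have md13 := mdist mf11 mf21.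
have md24 := mdist mf12 mf22.
have iw : \int[p]_z (eucl_dist (z.1.1 : 'rV[R]_n) z.2.1)%:E = w%:E.
  rewrite -e3 -hW; symmetry.
  apply: (push_ge0 (phi := fun z : ((Rd R n * Rd R n) * (Rd R n * Rd R n))%type => (z.1.1, z.2.1))).
  - exact: measurable_fun_pair.
  - by move=> A mA; rewrite hg.
  - by apply/measurable_EFinP; apply: mdist; [exact: measurable_fst|exact: measurable_snd].
  - by move=> y; rewrite lee_fin; exact: en_ge0.
have mP1 : measurable_fun setT (fun z : ((Rd R n * Rd R n) * (Rd R n * Rd R n))%type => Phi z.1).
  exact: (measurableT_comp mPhi measurable_fst).
have mP2 : measurable_fun setT (fun z : ((Rd R n * Rd R n) * (Rd R n * Rd R n))%type => Phi z.2).
  exact: (measurableT_comp mPhi measurable_snd).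
have int1 : p.-integrable setT (EFin \o (fun z => Phi z.1)).
  apply: measurable_bounded_integrable => //.
  by apply: (@bdd1 R _ _ (fun z => Phi z.1)) => z; exact: bPhi.
have int2 : p.-integrable setT (EFin \o (fun z => Phi z.2)).
  apply: measurable_bounded_integrable => //.
  by apply: (@bdd1 R _ _ (fun z => Phi z.2)) => z; exact: bPhi.
pose h := fun z : ((Rd R n * Rd R n) * (Rd R n * Rd R n))%type =>
  (eucl_dist (z.1.1 : 'rV[R]_n) z.2.1 + c * eucl_dist (z.1.2 : 'rV[R]_n) z.2.2)%R%:E.
have mh : measurable_fun setT h.
  apply/measurable_EFinP; apply: measurable_funD => //.
  exact: (measurable_funM (measurable_cst c) md24).
have h0 : forall z, 0 <= h z.
  move=> z; rewrite lee_fin; apply: addr_ge0; first exact: en_ge0.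
  by apply: mulr_ge0 => //; exact: en_ge0.
have ih : \int[p]_z h z = (w + c * xr)%:E.
  rewrite /h; under eq_integral do rewrite EFinD EFinM.
  rewrite ge0_integralD //; last 4 first.
  - by move=> z _; rewrite lee_fin; exact: en_ge0.
  - exact/measurable_EFinP.
  - by move=> z _; rewrite -EFinM lee_fin; apply: mulr_ge0 => //; exact: en_ge0.
  - by apply/measurable_EFinP; exact: (measurable_funM (measurable_cst c) md24).
  rewrite ge0_integralZl //; last 2 first.
  - exact/measurable_EFinP.
  - by move=> z _; rewrite lee_fin; exact: en_ge0.
  by rewrite iw -hx -EFinM -EFinD.
have inth : p.-integrable setT h.
  apply/integrableP; split => //.
  under eq_integral do rewrite gee0_abs ?h0 //.
  by rewrite ih ltry.
have le : \int[p]_z ((Phi z.1)%:E - (Phi z.2)%:E) <= \int[p]_z h z.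
  apply: le_integral => //.
    exact: integrableB.
  by move=> z _; rewrite -EFinB lee_fin; exact: lPhi.
rewrite integralB // -i1 -i2 h1 h2 ih -EFinB lee_fin in le.
rewrite hm hn -EFinB lee_fin.
have := le_trans (ler_norm _) tv1; have := le_trans (ler_norm _) tv2.
lra.
Qed.
End Step3.
Section Core.
Variables (R : realType) (n : nat).
Local Open Scope ereal_scope.

Lemma fmT d (T : measurableType d) (m : {finite_measure set T -> \bar R}) : m setT < +oo.
Proof. exact: fin_num_fun_lty (fin_num_measure m). Qed.

Lemma core (mu nu : {finite_measure set (Rd R n) -> \bar R})
  (Vm Vn : {finite_measure set (Rd R n * Rd R n)%type -> \bar R})
  (H1 : forall A, measurable A -> Vm (A `*` setT) = mu A)
  (H2 : forall A, measurable A -> Vn (A `*` setT) = nu A)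
  (Phi : (Rd R n * Rd R n)%type -> R) (mPhi : measurable_fun setT Phi)
  (bPhi : forall z, (`|Phi z| <= 1)%R) (c : R) (c0 : (0 <= c)%R)
  (lPhi : forall z1 z2 : (Rd R n * Rd R n)%type,
     (Phi z1 - Phi z2 <= eucl_dist (z1.1 : 'rV[R]_n) z2.1 + c * eucl_dist (z1.2 : 'rV[R]_n) z2.2)%R)
  (CF : R) (HF : Wg Vm Vn <= CF%:E * BLdual mu nu) :
  \int[Vm]_z (Phi z)%:E - \int[Vn]_z (Phi z)%:E <= (1 + c * CF)%:E * BLdual mu nu.
Proof.
have [b [hb b0]] := BL_fin (fmT mu) (fmT nu).
have hBf : BLdual_fst Vm Vn = b%:E by rewrite (BL_fst H1 H2 (fmT Vm) (fmT Vn)).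
rewrite hb -EFinM.
have [am [Mm [hm _]]] := int_bd mPhi bPhi (fmT Vm).
have [an [Mn [hn _]]] := int_bd mPhi bPhi (fmT Vn).
rewrite hm hn -EFinB.
apply/lee_addgt0Pr => e e0.
have c1 : (0 < c + 1)%R by lra.
have ec : (0 < e / (c + 1))%R by rewrite divr_gt0.
have : Wg Vm Vn < (CF * b + e / (c + 1))%:E.
  apply: (le_lt_trans HF); rewrite hb -EFinM lte_fin; lra.
move=> /ereal_inf_lt [y Sy ylt].
have y0 : 0 <= y.
  move: Sy => [Vt1 [Vt2 [p [_ _ _ _ ->]]]].
  by apply: integral_ge0 => z _; rewrite lee_fin; exact: en_ge0.
have [yr hy] : exists yr : R, y = yr%:E.
  by move: y0 ylt; clear Sy; case: y => // r _ _; exists r.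
move: Sy; rewrite hy => Sy.
have st := step3 (fmT Vm) (fmT Vn) mPhi bPhi c0 lPhi hBf Sy.
move: ylt; rewrite hy lte_fin => ylt.
rewrite hm hn -EFinB lee_fin in st; rewrite -EFinD lee_fin.
have h1 : (c * yr <= c * (CF * b + e / (c + 1)))%R by rewrite ler_wpM2l // ltW.
have h2 : (c * (e / (c + 1)) <= e)%R.
  rewrite mulrA ler_pdivrMr // ; nra.
nra.
Qed.
End Core.
Section Final.
Variables (R : realType) (n : nat).

Lemma lip_transport (tau : R) (t0 : 0 < tau) (psi : Rd R n -> R) :
  BL1 (@eucl_dist R n) psi -> forall z1 z2 : (Rd R n * Rd R n)%type,
  (psi \o transport tau) z1 - (psi \o transport tau) z2 <=
  eucl_dist (z1.1 : 'rV[R]_n) z2.1 + tau * eucl_dist (z1.2 : 'rV[R]_n) z2.2.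
Proof.
move=> [_ L] z1 z2 /=.
apply: le_trans (ler_norm _) _; apply: le_trans (L _ _) _.
rewrite /transport /eucl_dist.
have -> : (z1.1 : 'rV[R]_n) + tau *: (z1.2 : 'rV[R]_n) - ((z2.1 : 'rV[R]_n) + tau *: (z2.2 : 'rV[R]_n)) =
   ((z1.1 : 'rV[R]_n) - z2.1) + tau *: ((z1.2 : 'rV[R]_n) - z2.2).
  by rewrite scalerBr; rewrite opprD !addrA; congr (_ + _); rewrite -!addrA; congr (_ + _); rewrite addrC.
apply: le_trans (en_triangle _ _) _; rewrite en_scale ger0_norm //; exact: ltW.
Qed.

Lemma mrow_transport (tau : R) : mrow (transport (n:=n) tau).
Proof.
apply: mrowDZ.
  exact: (mrow_comp measurable_fst (@mrow_id R n)).
exact: (mrow_comp measurable_snd (@mrow_id R n)).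
Qed.
End Final.

Unset Implicit Arguments.
Unset Strict Implicit.
Set Strict Implicit.

Theorem lemmaA3 (R : realType) (n : nat)
  (V : {finite_measure set (Rd R n) -> \bar R} ->
       {finite_measure set ((Rd R n * Rd R n)%type) -> \bar R})
  (HV1 : forall mu A, measurable A -> V mu (A `*` setT) = mu A)
  (HF : forall r : R, 0 < r -> exists CF : R, forall mu nu : {finite_measure set (Rd R n) -> \bar R},
     supported_in mu r -> supported_in nu r ->
     (Wg (V mu) (V nu) <= CF%:E * BLdual mu nu)%E) :
  (* (V2) *)
  (forall r : R, 0 < r -> exists C : R, forall mu nu : {finite_measure set (Rd R n) -> \bar R},
     supported_in mu r -> supported_in nu r ->
     (BLdual2 (V mu) (V nu) <= C%:E * BLdual mu nu)%E) /\
  (* (V3) *)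
  (forall r : R, 0 < r -> exists CH : R, forall mu nu : {finite_measure set (Rd R n) -> \bar R},
     supported_in mu r -> supported_in nu r ->
     forall tau : R, 0 < tau ->
     (ipm [set (psi \o transport tau)
           | psi in [set psi : Rd R n -> R | BL1 (@eucl_dist R n) psi]]
          (V mu) (V nu)
      <= (1 + CH * tau)%:E * BLdual mu nu)%E).
Proof.
split.
- move=> r r0; have [CF HCF] := HF r r0; exists (1 + CF) => mu nu smu snu.
  apply: ge_ereal_sup => _ [psi Hpsi <-].
  have := @core R n mu nu (V mu) (V nu) (HV1 mu) (HV1 nu) psi (BL2_meas Hpsi)
    (proj1 Hpsi) 1 ler01 _ CF (HCF mu nu smu snu).
  rewrite mul1r; apply.
  move=> z1 z2; rewrite mul1r; apply: le_trans (ler_norm _) _.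
  apply: le_trans (proj2 Hpsi z1 z2) _; exact: d2_le.
- move=> r r0; have [CF HCF] := HF r r0; exists CF => mu nu smu snu tau t0.
  apply: ge_ereal_sup => _ [_ [psi Hpsi <-] <-].
  have := @core R n mu nu (V mu) (V nu) (HV1 mu) (HV1 nu) (psi \o transport tau)
    (BL_meas_g (@mrow_transport R n tau) Hpsi)
    (fun z => proj1 Hpsi _) tau (ltW t0) (lip_transport t0 Hpsi) CF (HCF mu nu smu snu).
  by rewrite mulrC.
Qed.
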